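(* Let $\Gamma$ be a graph with $N$ edges. Then $\mathcal{T}(\Gamma)=\{(\mathbf{z},M\mathbf{a}):\ \mathbf{z}\in\Sigma(\Gamma),\ \mathbf{a}\in\mathbb{C}^{2N},\ U(\mathbf{z})\mathbf{a}=\mathbf{a}\}$.
   Context: $\Gamma$ is a finite graph with edges $e_1,\dots,e_N$, each oriented from $o(e_j)$ to $\tau(e_j)$; $\deg(v)$ counts edge-ends at $v$ (loops twice). For $\boldsymbol{\ell}\in\mathbb{R}_+^N$, $(\Gamma,\boldsymbol{\ell})$ has $e_j\cong[0,\ell_j]$ ($t=0$ at $o(e_j)$) and Laplacian $-d^2/dt^2$ with standard vertex conditions (continuity, and $\sum_{o(e_j)=v}f'|_{e_j}(0)-\sum_{\tau(e_j)=v}f'|_{e_j}(\ell_j)=0$). For an eigenfunction with eigenvalue $k^2$, $k>0$: $f|_{e_j}(t)=A_j\cos(kt)+B_j\sin(kt)=C_j\cos(k(\ell_j-t))+D_j\sin(k(\ell_j-t))$ and $\mathrm{tr}_k(f)=(A_1,\dots,A_N,C_1,\dots,C_N,B_1,\dots,B_N,D_1,\dots,D_N)$; for $k=0$, $f\equiv c$ gives $A_j=C_j=c$, $B_j=D_j=0$. $\mathcal{T}(\Gamma)=\{(\exp(ik\boldsymbol{\ell}),\mathrm{tr}_k(f)):\boldsymbol{\ell}\in\mathbb{R}_+^N,\ k^2\text{ eigenvalue},\ f\text{ in its eigenspace (including }0)\}\subset\mathbb{T}^N\times\mathbb{C}^{4N}$, with $\exp(ik\boldsymbol{\ell})=(e^{ik\ell_j})_j$;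 $\Sigma(\Gamma)$ is its projection to $\mathbb{T}^N$. Let $S$ be the real orthogonal $2N\times2N$ matrix acting on $\mathbf{a}=(a_1,\dots,a_N,b_1,\dots,b_N)$ by $(S\mathbf{a})_j=\frac{2}{\deg(o(e_j))}\big(\sum_{i:o(e_i)=o(e_j)}b_i+\sum_{i:\tau(e_i)=o(e_j)}a_i\big)-b_j$, $(S\mathbf{a})_{N+j}=\frac{2}{\deg(\tau(e_j))}\big(\sum_{i:o(e_i)=\tau(e_j)}b_i+\sum_{i:\tau(e_i)=\tau(e_j)}a_i\big)-a_j$; $U(\mathbf{z})=\mathrm{diag}(\mathbf{z},\mathbf{z})S$ where $\mathrm{diag}(\mathbf{z},\mathbf{z})$ has diagonal $(z_1,\dots,z_N,z_1,\dots,z_N)$. (With $f|_{e_j}(t)=a_je^{ik(t-\ell_j)}+b_je^{-ikt}$, $f$ is an eigenfunction with eigenvalue $k^2$ iff $U(\exp(ik\boldsymbol{\ell}))\mathbf{a}=\mathbf{a}$.) $J=\begin{pmatrix}0&I_N\\ I_N&0\end{pmatrix}$ and $M=\begin{pmatrix}S+J\\ i(S-J)\end{pmatrix}$, a $4N\times2N$ matrix. *)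

(* Defs.v *)
From HB Require Import structures.
From mathcomp Require Import all_boot all_order all_algebra.
From mathcomp Require Import all_classical all_reals all_analysis.
From mathcomp Require Import complex.
Set Implicit Arguments. Unset Strict Implicit. Unset Printing Implicit Defensive.
Import Order.TTheory GRing.Theory Num.Theory.
Local Open Scope ring_scope.

Section QGraph.
Variable R : realType.
Local Notation C := R[i].

Definition rC (x : R) : C := (x%:C)%C.
Definition iC : C := ('i)%C.

Definition expi (x : R) : C := rC (cos x) + iC * rC (sin x).

Definition cderivable (g : R -> C) (t : R) : Prop :=
  derivable (fun s => complex.Re (g s)) t 1 /\ derivable (fun s => complex.Im (g s)) t 1.
Definition cderiv (g : R -> C) : R -> C :=
  fun t => rC (derive1 (fun s => complex.Re (g s)) t) + iC * rC (derive1 (fun s => complex.Im (g s)) t).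

(* The graph: N edges e_j oriented from o j to tau j, vertex set V. *)
Variables (N : nat) (V : finType) (o tau : 'I_N -> V).

(* degree: number of edge-ends at v (loops counted twice) *)
Definition deg (v : V) : nat := #|[set j | o j == v]| + #|[set j | tau j == v]|.

(* A function on the metric graph (Gamma, l): one function per edge,
   f j restricted to [0, l j] being f on e_j (t = 0 at o(e_j)). *)
Definition onEdge (l : 'I_N -> R) (j : 'I_N) (t : R) := 0 <= t <= l j.

(* f satisfies -f'' = lam f on every edge, with standard vertex conditions
   (continuity and Kirchhoff).  The set of such f is the eigenspace of lam
   (including 0). *)
Definition in_eigenspace (l : 'I_N -> R) (lam : R) (f : 'I_N -> R -> C) : Prop :=
  [/\ (forall j t, cderivable (f j) t),
      (forall j t, onEdge l j t ->
         cderivable (cderiv (f j)) t /\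
         - cderiv (cderiv (f j)) t = rC lam * f j t),
      (exists g : V -> C, forall j, f j 0 = g (o j) /\ f j (l j) = g (tau j)) &
      (forall v : V,
         \sum_(j | o j == v) cderiv (f j) 0
         - \sum_(j | tau j == v) cderiv (f j) (l j) = 0)].

Definition is_eigenvalue (l : 'I_N -> R) (lam : R) : Prop :=
  exists f, in_eigenspace l lam f /\ exists j t, onEdge l j t /\ f j t != 0.

Definition trace_vec (A Cc B D : 'I_N -> C) : 'cV[C]_((N + N) + (N + N)) :=
  col_mx (col_mx (\col_j A j) (\col_j Cc j)) (col_mx (\col_j B j) (\col_j D j)).

Definition is_trace (l : 'I_N -> R) (k : R) (f : 'I_N -> R -> C)
    (w : 'cV[C]_((N + N) + (N + N))) : Prop :=
  exists A Cc B D : 'I_N -> C, w = trace_vec A Cc B D /\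
  if k == 0 then
    forall j, Cc j = A j /\ B j = 0 /\ D j = 0 /\
              (forall t, onEdge l j t -> f j t = A j)
  else
    forall j t, onEdge l j t ->
      f j t = A j * rC (cos (k * t)) + B j * rC (sin (k * t)) /\
      f j t = Cc j * rC (cos (k * (l j - t))) + D j * rC (sin (k * (l j - t))).

Definition inT (z : 'I_N -> C) (w : 'cV[C]_((N + N) + (N + N))) : Prop :=
  exists l : 'I_N -> R, (forall j, 0 < l j) /\
  exists k : R, 0 <= k /\ is_eigenvalue l (k ^+ 2) /\
    z = (fun j => expi (k * l j)) /\
    exists f, in_eigenspace l (k ^+ 2) f /\ is_trace l k f w.

Definition inSigma (z : 'I_N -> C) : Prop := exists w, inT z w.

Definition Sapp (a : 'cV[C]_(N + N)) : 'cV[C]_(N + N) :=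
  let aa j := a (lshift N j) 0 in
  let bb j := a (rshift N j) 0 in
  \col_p match fintype.split p with
    | inl j => (2%:R / (deg (o j))%:R) *
                 (\sum_(i | o i == o j) bb i + \sum_(i | tau i == o j) aa i) - bb j
    | inr j => (2%:R / (deg (tau j))%:R) *
                 (\sum_(i | o i == tau j) bb i + \sum_(i | tau i == tau j) aa i) - aa j
    end.

Definition Smx : 'M[C]_(N + N) := \matrix_(p, q) Sapp (delta_mx q 0) p 0.

Definition Jmx : 'M[C]_(N + N) := block_mx 0 1%:M 1%:M 0.

Definition Umx (z : 'I_N -> C) : 'M[C]_(N + N) :=
  diag_mx (\row_p match fintype.split p with inl j => z j | inr j => z j end) *m Smx.

Definition Mmx : 'M[C]_((N + N) + (N + N), N + N) :=
  col_mx (Smx + Jmx) (iC *: (Smx - Jmx)).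

End QGraph.

(* Main.v *)
Require Import Defs.
From HB Require Import structures.
From mathcomp Require Import all_boot all_order all_algebra.
From mathcomp Require Import all_classical all_reals all_analysis.
From mathcomp Require Import complex ring lra.
Import Order.TTheory GRing.Theory Num.Theory.
Set Implicit Arguments. Unset Strict Implicit. Unset Printing Implicit Defensive.
Local Open Scope ring_scope.

Section Analytic.
Variable R : realType.
Local Notation C := R[i].


Lemma derive1_eq_right (g h : R -> R) x d : 0 < d -> derivable g x 1 -> derivable h x 1 ->
  (forall t, x <= t <= x + d -> g t = h t) -> derive1 g x = derive1 h x.
Proof.
move=> d0 dg dh egh.
rewrite !derive1E /derive (cvg_at_rightE _ _ dg).
apply: cvg_lim => //.
apply: cvg_trans (cvg_dnbhs_at_right dh).
apply: near_eq_cvg; near=> s.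
have s0 : 0 < s by near: s; exact: nbhs_right_gt.
have sd : s < d by near: s; exact: nbhs_right_lt.
rewrite /= !egh //; rewrite ?lexx. all: rewrite /GRing.scale /= ?mulr1. all: try (apply/andP; split). all: lra.
Unshelve. all: by end_near. Qed.

Lemma derive1_eq_left (g h : R -> R) x d : 0 < d -> derivable g x 1 -> derivable h x 1 ->
  (forall t, x - d <= t <= x -> g t = h t) -> derive1 g x = derive1 h x.
Proof.
move=> d0 dg dh egh.
rewrite !derive1E /derive (cvg_at_leftE _ _ dg).
apply: cvg_lim => //.
apply: cvg_trans (cvg_dnbhs_at_left dh).
apply: near_eq_cvg; near=> s.
have s0 : s < 0 by near: s; exact: nbhs_left_lt.
have sd : - d < s by near: s; apply: nbhs_left_gt; rewrite oppr_lt0.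
rewrite /= !egh //; rewrite ?lexx. all: rewrite /GRing.scale /= ?mulr1. all: try (apply/andP; split). all: lra.
Unshelve. all: by end_near. Qed.


Lemma is_derive_lin (k t : R) : is_derive t 1 (fun s : R => k * s) k.
Proof.
have H := is_deriveZ k (is_derive_id t (1:R)).
change (is_derive t 1 (k \*: (@id R)) k).
by apply: is_derive_eq H _; rewrite /GRing.scale /= mulr1.
Qed.

Lemma is_derive_cosM (k t : R) : is_derive t 1 (fun s : R => cos (k * s)) (- sin (k*t) * k).
Proof.
have := @is_derive1_comp R cos (fun s => k * s) t _ _ (is_derive_cos (k * t)) (is_derive_lin k t).
by [].
Qed.

Lemma is_derive_sinM (k t : R) : is_derive t 1 (fun s : R => sin (k * s)) (cos (k*t) * k).
Proof.
exact: (@is_derive1_comp R sin (fun s => k * s) t _ _ (is_derive_sin (k * t)) (is_derive_lin k t)).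
Qed.

Lemma is_derive_trig (a b k t : R) :
  is_derive t 1 (fun s => a * cos (k * s) + b * sin (k * s))
    (k * (b * cos (k * t) - a * sin (k * t))).
Proof.
have H1 := is_deriveZ a (is_derive_cosM k t).
have H2 := is_deriveZ b (is_derive_sinM k t).
have H := is_deriveD H1 H2.
change (is_derive t 1 (a \*: (fun s => cos (k * s)) + b \*: (fun s => sin (k * s))) (k * (b * cos (k * t) - a * sin (k * t)))).
apply: is_derive_eq H _; rewrite /GRing.scale /=; ring.
Qed.


Definition hf (A B : C) (k t : R) : C := A * rC (cos (k*t)) + B * rC (sin (k*t)).

Lemma Re_hf A B k t : complex.Re (hf A B k t) = complex.Re A * cos (k*t) + complex.Re B * sin (k*t).
Proof. by case: A => a1 a2; case: B => b1 b2; rewrite /hf /rC /=; ring. Qed.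
Lemma Im_hf A B k t : complex.Im (hf A B k t) = complex.Im A * cos (k*t) + complex.Im B * sin (k*t).
Proof. by case: A => a1 a2; case: B => b1 b2; rewrite /hf /rC /=; ring. Qed.

Lemma trig_derivable (a b k t : R) : derivable (fun s => a * cos (k * s) + b * sin (k * s)) t 1.
Proof. by have [] := is_derive_trig a b k t. Qed.

Lemma trig_derive1 (a b k t : R) : derive1 (fun s => a * cos (k * s) + b * sin (k * s)) t =
   k * (b * cos (k * t) - a * sin (k * t)).
Proof. by rewrite derive1E; have [] := is_derive_trig a b k t. Qed.

Lemma Re_hfE A B k : (fun s => complex.Re (hf A B k s)) =
  (fun s => complex.Re A * cos (k * s) + complex.Re B * sin (k * s)).
Proof. by apply: funext => s; rewrite Re_hf. Qed.
Lemma Im_hfE A B k : (fun s => complex.Im (hf A B k s)) =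
  (fun s => complex.Im A * cos (k * s) + complex.Im B * sin (k * s)).
Proof. by apply: funext => s; rewrite Im_hf. Qed.

Lemma cderivable_hf A B k t : cderivable (hf A B k) t.
Proof. by rewrite /cderivable Re_hfE Im_hfE; split; apply: trig_derivable. Qed.

Lemma cderiv_hf A B k : cderiv (hf A B k) = hf (rC k * B) (- (rC k * A)) k.
Proof.
apply: funext => t; rewrite /cderiv Re_hfE Im_hfE !trig_derive1.
case: A => a1 a2; case: B => b1 b2; rewrite /hf /rC /iC /=.
apply/eqP; rewrite eq_complex /=; apply/andP; split; apply/eqP; ring.
Qed.
End Analytic.

Section Ids.
Variable R : realType.
Local Notation C := R[i].
Local Notation i := (iC R).

Ltac cring := rewrite /rC /iC; apply/eqP; rewrite eq_complex /=; apply/andP; split; apply/eqP; ring.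

Definition zc (c s : R) : C := rC c + i * rC s.
Definition zb (c s : R) : C := rC c - i * rC s.

Lemma zz (c s : R) : c ^+ 2 + s ^+ 2 = 1 -> zc c s * zb c s = 1.
Proof.
move=> h; rewrite /zc /zb /rC /iC; apply/eqP; rewrite eq_complex /=; apply/andP; split; apply/eqP.
  by apply: eq_trans h; ring.
ring.
Qed.

Lemma idJ1 (x y : C) c s : (x + zc c s * y) * rC c + i * (x - zc c s * y) * rC s =
   x * zc c s + y * (zc c s * zb c s).
Proof. case: x => x1 x2; case: y => y1 y2; rewrite /zc /zb; cring. Qed.

Lemma idJ2 (x y k : C) c s :
  (k * (i * (x - zc c s * y))) * rC c + (- (k * (x + zc c s * y))) * rC s =
  k * (i * (x * zc c s - y * (zc c s * zb c s))).
Proof. case: x => x1 x2; case: y => y1 y2; case: k => k1 k2; rewrite /zc /zb; cring. Qed.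

Lemma idJ3 (x y : C) c s :
  (y + zc c s * x) * rC s - (i * (y - zc c s * x)) * rC c =
  i * (x * (zc c s * zb c s) - y * zc c s).
Proof. case: x => x1 x2; case: y => y1 y2; rewrite /zc /zb; cring. Qed.

Lemma iC_neq0 : i != 0.
Proof. by rewrite /iC; apply/eqP; case => /eqP; rewrite oner_eq0. Qed.

Lemma idI1 (Cc D : C) c s :
  zc c s * ((Cc * rC c + D * rC s) - i * (Cc * rC s - D * rC c)) = (Cc + i * D) * (zc c s * zb c s).
Proof. case: Cc => x1 x2; case: D => y1 y2; rewrite /zc /zb; cring. Qed.

Lemma idI2 (Cc D : C) c s :
  zc c s * (Cc - i * D) = (Cc * rC c + D * rC s) + i * (Cc * rC s - D * rC c).
Proof. case: Cc => x1 x2; case: D => y1 y2; rewrite /zc /zb; cring. Qed.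

Lemma idI3 (Cc D k : C) c s :
  (k * (Cc * rC s - D * rC c)) * rC c + (- (k * (Cc * rC c + D * rC s))) * rC s =
  - (k * D) * (zc c s * zb c s).
Proof. case: Cc => x1 x2; case: D => y1 y2; case: k => k1 k2; rewrite /zc /zb; cring. Qed.

Lemma half_add (x y : C) : (x - y) / 2%:R + (x + y) / 2%:R = x.
Proof. by field. Qed.

Lemma half_sub (x y : C) : i * ((x - i * y) / 2%:R - (x + i * y) / 2%:R) = y.
Proof.
have -> : i * ((x - i * y) / 2%:R - (x + i * y) / 2%:R) = - (i ^+ 2) * y.
  by field.
by rewrite /iC sqr_i opprK mul1r.
Qed.

Lemma half_sub2 (x y : C) : x - (x + y) / 2%:R = (x - y) / 2%:R.
Proof. by field. Qed.

Lemma expi_zc x : expi x = zc (cos x) (sin x).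
Proof. by []. Qed.

Lemma cs1 x : cos x ^+ 2 + sin x ^+ 2 = 1 :> R.
Proof. exact: cos2Dsin2. Qed.
End Ids.

Section Alg.
Variables (R : realType) (N : nat) (V : finType) (o tau : 'I_N -> V).
Local Notation C := R[i].
Local Notation S := (Smx R o tau).
Local Notation Sap := (@Sapp R N V o tau).

Definition SF (aa bb : 'I_N -> C) (p : 'I_(N+N)) : C :=
  match fintype.split p with
    | inl j => (2%:R / (deg o tau (o j))%:R) *
                 (\sum_(i | o i == o j) bb i + \sum_(i | tau i == o j) aa i) - bb j
    | inr j => (2%:R / (deg o tau (tau j))%:R) *
                 (\sum_(i | o i == tau j) bb i + \sum_(i | tau i == tau j) aa i) - aa j
    end.

Lemma SappE a p q : Sap a p q = SF (fun j => a (lshift N j) 0) (fun j => a (rshift N j) 0) p.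
Proof. by rewrite mxE. Qed.

Lemma SF_lin aa1 bb1 aa2 bb2 c p :
  SF (fun j => c * aa1 j + aa2 j) (fun j => c * bb1 j + bb2 j) p = c * SF aa1 bb1 p + SF aa2 bb2 p.
Proof. by rewrite /SF; case: fintype.split => j; rewrite !big_split /= -!mulr_sumr; ring. Qed.

Lemma Sapp_lin (c : C) u v : Sap (c *: u + v) = c *: Sap u + Sap v.
Proof.
apply/matrixP => p q; rewrite [RHS]mxE [in RHS]mxE !SappE.
have -> : (fun j => (c *: u + v) (lshift N j) 0) = (fun j => c * u (lshift N j) 0 + v (lshift N j) 0).
  by apply/funext => j; rewrite !mxE.
have -> : (fun j => (c *: u + v) (rshift N j) 0) = (fun j => c * u (rshift N j) 0 + v (rshift N j) 0).
  by apply/funext => j; rewrite !mxE.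
by rewrite SF_lin.
Qed.

Lemma Sapp0 : Sap 0 = 0.
Proof.
have H := Sapp_lin 1 0 0; rewrite scaler0 addr0 scale1r in H.
by apply: (@addIr _ (Sap 0)); rewrite add0r -H.
Qed.

Lemma Sapp_add u v : Sap (u + v) = Sap u + Sap v.
Proof. by have := Sapp_lin 1 u v; rewrite !scale1r. Qed.

Lemma Sapp_scale (c : C) u : Sap (c *: u) = c *: Sap u.
Proof. by have := Sapp_lin c u 0; rewrite !addr0 Sapp0 addr0. Qed.

Lemma SmxE a : S *m a = Sap a.
Proof.
rewrite {1}[a]matrix_sum_delta mulmx_sumr.
under eq_bigr do rewrite big_ord1 -scalemxAr -colE.
have colS : forall i, col i S = Sap (delta_mx i 0).
  by move=> i; apply/matrixP => p q; rewrite !mxE.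
under eq_bigr do rewrite colS -Sapp_scale.
rewrite -(big_morph _ Sapp_add Sapp0); congr Sap.
by rewrite [RHS]matrix_sum_delta; apply: eq_bigr => i _; rewrite big_ord1.
Qed.

Lemma col_split m n (u v : 'cV[C]_(m + n)) :
  (forall j, u (lshift n j) 0 = v (lshift n j) 0) ->
  (forall j, u (rshift m j) 0 = v (rshift m j) 0) -> u = v.
Proof.
move=> hl hr; apply/matrixP => p q; rewrite (ord1 q) -(splitK p).
by case: (fintype.split p) => j /=.
Qed.

Lemma SL (a : 'cV[C]_(N+N)) (j : 'I_N) : (S *m a) (lshift N j) 0 = (2%:R / (deg o tau (o j))%:R) *
   (\sum_(i | o i == o j) a (rshift N i) 0 + \sum_(i | tau i == o j) a (lshift N i) 0)
   - a (rshift N j) 0.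
Proof. by rewrite SmxE SappE /SF (unsplitK (inl _ j)). Qed.

Lemma SR (a : 'cV[C]_(N+N)) (j : 'I_N) : (S *m a) (rshift N j) 0 = (2%:R / (deg o tau (tau j))%:R) *
   (\sum_(i | o i == tau j) a (rshift N i) 0 + \sum_(i | tau i == tau j) a (lshift N i) 0)
   - a (lshift N j) 0.
Proof. by rewrite SmxE SappE /SF (unsplitK (inr _ j)). Qed.

Lemma JE (a : 'cV[C]_(N+N)) : Jmx R N *m a = col_mx (dsubmx a) (usubmx a).
Proof.
by rewrite /Jmx -{1}[a]vsubmxK mul_block_col !mul0mx !mul1mx add0r addr0.
Qed.

Lemma MmxE (a : 'cV[C]_(N+N)) : Mmx R o tau *m a = trace_vec
  (fun j => (S *m a) (lshift N j) 0 + a (rshift N j) 0)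
  (fun j => (S *m a) (rshift N j) 0 + a (lshift N j) 0)
  (fun j => iC R * ((S *m a) (lshift N j) 0 - a (rshift N j) 0))
  (fun j => iC R * ((S *m a) (rshift N j) 0 - a (lshift N j) 0)).
Proof.
rewrite /Mmx mul_col_mx -scalemxAl mulmxDl mulmxBl JE /trace_vec.
congr col_mx; apply: col_split => j;
  rewrite ?col_mxEu ?col_mxEd !mxE ?col_mxEu ?col_mxEd ?mxE ?(unsplitK (inl _ j)) ?(unsplitK (inr _ j)) ?mxE //.
Qed.

Lemma UL (z : 'I_N -> C) (a : 'cV[C]_(N+N)) (j : 'I_N) : (Umx o tau z *m a) (lshift N j) 0 = z j * (S *m a) (lshift N j) 0.
Proof. by rewrite /Umx -mulmxA mul_diag_mx !mxE (unsplitK (inl _ j)). Qed.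

Lemma UR (z : 'I_N -> C) (a : 'cV[C]_(N+N)) (j : 'I_N) : (Umx o tau z *m a) (rshift N j) 0 = z j * (S *m a) (rshift N j) 0.
Proof. by rewrite /Umx -mulmxA mul_diag_mx !mxE (unsplitK (inr _ j)). Qed.

End Alg.

Section Alg2.
Variables (R : realType) (N : nat) (V : finType) (o tau : 'I_N -> V).
Local Notation C := R[i].
Local Notation S := (Smx R o tau).
Local Notation i := (iC R).
Local Notation dg v := ((deg o tau v)%:R : C).

Lemma sum_pred_const (P : pred 'I_N) (c : C) :
  \sum_(j | P j) c = (#|[set j | P j]|)%:R * c.
Proof. by rewrite sumr_const cardsE mulr_natl. Qed.

Lemma vertex_sum (v : V) (gv : C) (F G : 'I_N -> C) :
  \sum_(j | o j == v) (gv + F j) + \sum_(j | tau j == v) (gv + G j) =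
  dg v * gv + (\sum_(j | o j == v) F j + \sum_(j | tau j == v) G j).
Proof. by rewrite !big_split /= !sum_pred_const /deg natrD; ring. Qed.

Lemma deg_o j : dg (o j) != 0.
Proof.
rewrite pnatr_eq0 /deg addn_eq0 negb_and -!lt0n; apply/orP; left.
by apply/card_gt0P; exists j; rewrite inE.
Qed.

Lemma deg_tau j : dg (tau j) != 0.
Proof.
rewrite pnatr_eq0 /deg addn_eq0 negb_and -!lt0n; apply/orP; right.
by apply/card_gt0P; exists j; rewrite inE.
Qed.

Lemma deg0_sums v (F G : 'I_N -> C) : dg v = 0 ->
  \sum_(j | o j == v) F j = 0 /\ \sum_(j | tau j == v) G j = 0.
Proof.
move=> /eqP; rewrite pnatr_eq0 /deg addn_eq0 => /andP[h1 h2].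
split; rewrite big_pred0 // => j; apply/negbTE/negP => hj.
  move: h1; rewrite cards_eq0 => /eqP h1.
  have : j \in [set j | o j == v] by rewrite inE hj.
  by rewrite h1 inE.
move: h2; rewrite cards_eq0 => /eqP h2.
have : j \in [set j | tau j == v] by rewrite inE hj.
by rewrite h2 inE.
Qed.

Lemma alg_LR (z A Cc B D : 'I_N -> C) (g : V -> C) :
 (forall j, A j = g (o j)) -> (forall j, Cc j = g (tau j)) ->
 (forall v, \sum_(j | o j == v) B j + \sum_(j | tau j == v) D j = 0) ->
 (forall j, z j * (A j - i * B j) = Cc j + i * D j) ->
 (forall j, z j * (Cc j - i * D j) = A j + i * B j) ->
 exists a, Umx o tau z *m a = a /\ trace_vec A Cc B D = Mmx R o tau *m a.
Proof.
move=> hA hC hK h1 h2.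
pose a : 'cV[C]_(N+N) := col_mx (\col_j ((Cc j + i * D j) / 2%:R))
                                 (\col_j ((A j + i * B j) / 2%:R)).
have aL j : a (lshift N j) 0 = (Cc j + i * D j) / 2%:R by rewrite col_mxEu mxE.
have aR j : a (rshift N j) 0 = (A j + i * B j) / 2%:R by rewrite col_mxEd mxE.
have key v : dg v != 0 -> (2%:R / dg v) *
   (\sum_(j | o j == v) a (rshift N j) 0 + \sum_(j | tau j == v) a (lshift N j) 0) = g v.
  move=> dv.
  have E1 : \sum_(j | o j == v) a (rshift N j) 0 =
            \sum_(j | o j == v) (g v / 2%:R + i * B j / 2%:R).
    by apply: eq_bigr => j /eqP hj; rewrite aR hA hj mulrDl.
  have E2 : \sum_(j | tau j == v) a (lshift N j) 0 =
            \sum_(j | tau j == v) (g v / 2%:R + i * D j / 2%:R).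
    by apply: eq_bigr => j /eqP hj; rewrite aL hC hj mulrDl.
  have S0 : \sum_(j | o j == v) (i * B j / 2%:R) + \sum_(j | tau j == v) (i * D j / 2%:R) = 0.
    by rewrite -!mulr_suml -!mulr_sumr -mulrDl -mulrDr hK mulr0 mul0r.
  rewrite E1 E2 vertex_sum S0 addr0; by field.
have xL j : (S *m a) (lshift N j) 0 = (A j - i * B j) / 2%:R.
  by rewrite SL key ?deg_o // aR -hA half_sub2.
have xR j : (S *m a) (rshift N j) 0 = (Cc j - i * D j) / 2%:R.
  by rewrite SR key ?deg_tau // aL -hC half_sub2.
exists a; split.
  by apply: col_split => j; rewrite ?UL ?UR ?xL ?xR ?aL ?aR mulrA ?h1 ?h2.
rewrite MmxE /trace_vec; congr col_mx; congr col_mx; apply/matrixP => p q; rewrite [LHS]mxE [RHS]mxE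
  ?xL ?xR ?aL ?aR ?half_add ?half_sub //. all: by rewrite addrC half_add.
Qed.

Lemma kirch_RL (a : 'cV[C]_(N+N)) v :
  \sum_(j | o j == v) (i * ((S *m a) (lshift N j) 0 - a (rshift N j) 0)) +
  \sum_(j | tau j == v) (i * ((S *m a) (rshift N j) 0 - a (lshift N j) 0)) = 0.
Proof.
set X := \sum_(j | o j == v) a (rshift N j) 0 + \sum_(j | tau j == v) a (lshift N j) 0.
have E1 : \sum_(j | o j == v) (i * ((S *m a) (lshift N j) 0 - a (rshift N j) 0)) =
          \sum_(j | o j == v) (i * (2%:R / dg v * X) + (- (2%:R * i)) * a (rshift N j) 0).
  by apply: eq_bigr => j /eqP hj; rewrite SL hj -/X; ring.
have E2 : \sum_(j | tau j == v) (i * ((S *m a) (rshift N j) 0 - a (lshift N j) 0)) =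
          \sum_(j | tau j == v) (i * (2%:R / dg v * X) + (- (2%:R * i)) * a (lshift N j) 0).
  by apply: eq_bigr => j /eqP hj; rewrite SR hj -/X; ring.
rewrite E1 E2 vertex_sum -!mulr_sumr -mulrDr -/X.
have [d0|dv] := eqVneq (dg v) 0.
  have [s1 _] := deg0_sums (fun j => a (rshift N j) 0) (fun j => a (rshift N j) 0) d0.
  have [_ s2] := deg0_sums (fun j => a (lshift N j) 0) (fun j => a (lshift N j) 0) d0.
  by rewrite /X s1 s2 d0 addr0 mul0r mulr0 addr0.
by field.
Qed.

Lemma fixL z (a : 'cV[C]_(N+N)) : Umx o tau z *m a = a ->
  forall j, z j * (S *m a) (lshift N j) 0 = a (lshift N j) 0.
Proof. by move=> h j; rewrite -UL h. Qed.

Lemma fixR z (a : 'cV[C]_(N+N)) : Umx o tau z *m a = a ->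
  forall j, z j * (S *m a) (rshift N j) 0 = a (rshift N j) 0.
Proof. by move=> h j; rewrite -UR h. Qed.
End Alg2.

Section An2.
Variable R : realType.
Local Notation C := R[i].

Lemma cderiv_eq_0 (f : R -> C) A B k l : 0 < l -> cderivable f 0 ->
  (forall t, 0 <= t <= l -> f t = hf A B k t) -> cderiv f 0 = cderiv (hf A B k) 0.
Proof.
move=> l0 [d1 d2] e; have [h1 h2] := cderivable_hf A B k 0.
rewrite /cderiv (@derive1_eq_right _ (fun s => complex.Re (f s)) (fun s => complex.Re (hf A B k s)) 0 l) //;
  last by move=> t; rewrite add0r => /e ->.
rewrite (@derive1_eq_right _ (fun s => complex.Im (f s)) (fun s => complex.Im (hf A B k s)) 0 l) //.
by move=> t; rewrite add0r => /e ->.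
Qed.

Lemma cderiv_eq_l (f : R -> C) A B k l : 0 < l -> cderivable f l ->
  (forall t, 0 <= t <= l -> f t = hf A B k t) -> cderiv f l = cderiv (hf A B k) l.
Proof.
move=> l0 [d1 d2] e; have [h1 h2] := cderivable_hf A B k l.
rewrite /cderiv (@derive1_eq_left _ (fun s => complex.Re (f s)) (fun s => complex.Re (hf A B k s)) l l) //;
  last by move=> t; rewrite subrr => /e ->.
rewrite (@derive1_eq_left _ (fun s => complex.Im (f s)) (fun s => complex.Im (hf A B k s)) l l) //.
by move=> t; rewrite subrr => /e ->.
Qed.

Lemma sin_nz (k l : R) : 0 < k -> 0 < l -> exists t, 0 <= t <= l /\ sin (k * t) != 0.
Proof.
move=> k0 l0; have p0 := pi_gt0 R.
have [hl|hl] := leP (pi / (4%:R * k)) l.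
  exists (pi / (4%:R * k)); split.
    by apply/andP; split => //; apply: ltW; apply: divr_gt0 => //; apply: mulr_gt0.
  have -> : k * (pi / (4%:R * k)) = pi / 4%:R by field; rewrite gt_eqF.
  by apply: lt0r_neq0; apply: sin_gt0_pihalf; apply/andP; split; lra.
exists l; split; first by apply/andP; split => //; apply: ltW.
apply: lt0r_neq0; apply: sin_gt0_pihalf; apply/andP; split.
  exact: mulr_gt0.
have : k * l < k * (pi / (4%:R * k)) by rewrite ltr_pM2l.
have -> : k * (pi / (4%:R * k)) = pi / 4%:R by field; rewrite gt_eqF.
lra.
Qed.

Lemma hf0 (A B : C) k : hf A B k 0 = A.
Proof. by rewrite /hf /rC mulr0 cos0 sin0 mulr1 mulr0 addr0. Qed.

Lemma rC_neq0 (x : R) : x != 0 -> rC x != 0.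
Proof. by move=> h; apply/negP => /eqP [] /eqP; rewrite (negbTE h). Qed.

Lemma hf_coef (A B A' B' : C) k l : 0 < k -> 0 < l ->
  (forall t, 0 <= t <= l -> hf A B k t = hf A' B' k t) -> A = A' /\ B = B'.
Proof.
move=> k0 l0 e.
have eA : A = A' by rewrite -(hf0 A B k) -(hf0 A' B' k) e // lexx ltW.
split => //; have [t [ht st]] := sin_nz k0 l0.
have := e t ht; rewrite /hf eA => /addrI.
by move/(mulIf (rC_neq0 st)).
Qed.

Lemma hf_shift (Cc D : C) k l t :
  Cc * rC (cos (k * (l - t))) + D * rC (sin (k * (l - t))) =
  hf (Cc * rC (cos (k * l)) + D * rC (sin (k * l)))
     (Cc * rC (sin (k * l)) - D * rC (cos (k * l))) k t.
Proof.
rewrite mulrBr cosB sinB /hf /rC !rmorphD !rmorphN !rmorphM /=; ring.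
Qed.

Lemma eigen_hf (A B : C) k t :
  cderivable (cderiv (hf A B k)) t /\
  - cderiv (cderiv (hf A B k)) t = rC (k ^+ 2) * hf A B k t.
Proof.
rewrite !cderiv_hf; split; first exact: cderivable_hf.
rewrite /hf /rC !rmorphM /=; ring.
Qed.

Lemma rC0 : rC (0:R) = 0. Proof. reflexivity. Qed.
Lemma rC1 : rC (1:R) = 1. Proof. reflexivity. Qed.

Lemma hf00t k t : hf (0 : C) 0 k t = 0.
Proof. by rewrite /hf !mul0r addr0. Qed.

Lemma cd00 k : cderiv (hf (0 : C) 0 k) = hf 0 0 k.
Proof. by rewrite cderiv_hf mulr0 oppr0. Qed.

Lemma choose_kl (N : nat) (l0 : 'I_N -> R) (k0 : R) : (forall j, 0 < l0 j) -> 0 <= k0 ->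
  exists k (l : 'I_N -> R), 0 < k /\ (forall j, 0 < l j) /\
    (fun j => expi (k0 * l0 j)) = (fun j => expi (k * l j)).
Proof.
move=> lp; rewrite le_eqVlt => /orP[/eqP <-|kp]; last by exists k0, l0.
exists 1, (fun _ => pi *+ 2); split => //; split.
  by move=> j; rewrite mulrn_wgt0 // pi_gt0.
apply: funext => j; rewrite mul0r mul1r /expi cos0 sin0 cos2pi sin2pi //.
Qed.

Lemma rC_k_neq0 (k : R) : 0 < k -> rC k != 0.
Proof. by move=> kp; apply: rC_neq0; rewrite gt_eqF. Qed.
End An2.

Lemma trace0 (R : realType) (N : nat) :
  trace_vec (fun _ : 'I_N => (0 : R[i])) (fun=> 0) (fun=> 0) (fun=> 0) = 0.
Proof.
have e : \col_(j < N) (0 : R[i]) = 0 by apply/matrixP => p q; rewrite !mxE.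
by rewrite /trace_vec e !col_mx0.
Qed.


Unset Implicit Arguments.

Theorem mainTheorem7 (R : realType) (N : nat) (V : finType) (o tau : 'I_N -> V)
    (z : 'I_N -> R[i]) (w : 'cV[R[i]]_((N + N) + (N + N))) :
  inT o tau z w <->
  (inSigma o tau z /\
   exists a : 'cV[R[i]]_(N + N),
     Umx o tau z *m a = a /\ w = Mmx R o tau *m a).
Proof.
split.
- move=> hT; split; first by exists w.
  case: hT => l [lpos [k [k0 [eig [zE [f [Hf Htr]]]]]]].
  case: Hf => fder fsec [g gH] kir.
  case: Htr => A [Cc [B [D [wE Htr]]]].
  have edge0 j : onEdge l j 0 by rewrite /onEdge lexx ltW.
  have edgel j : onEdge l j (l j) by rewrite /onEdge lexx ltW.
  suff [a [h1 h2]] : exists a, Umx o tau z *m a = a /\ trace_vec A Cc B D = Mmx R o tau *m a.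
    by exists a; split => //; rewrite wE.
  case: eqP Htr => [k00|kn0] Htr.
  + apply: (@alg_LR R N V o tau z A Cc B D g).
    * move=> j; have [_ [_ [_ hf]]] := Htr j.
      by rewrite -(hf 0 (edge0 j)) (gH j).1.
    * move=> j; have [-> [_ [_ hf]]] := Htr j.
      by rewrite -(hf _ (edgel j)) (gH j).2.
    * move=> v; rewrite !big1 ?addr0 // => j _.
        by have [_ [_ [-> _]]] := Htr j.
      by have [_ [-> _]] := Htr j.
    * move=> j; have [-> [-> [-> _]]] := Htr j.
      by rewrite zE /= k00 mul0r /expi cos0 sin0 rC1 rC0 !mulr0 !addr0 subr0 mul1r.
    * move=> j; have [-> [-> [-> _]]] := Htr j.
      by rewrite zE /= k00 mul0r /expi cos0 sin0 rC1 rC0 !mulr0 !addr0 subr0 mul1r.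
  + have kpos : 0 < k by rewrite lt_def; apply/andP; split => //; apply/eqP.
    have rep1 j t : onEdge l j t -> f j t = hf (A j) (B j) k t.
      by move=> ht; have [-> _] := Htr j t ht.
    have rep2 j t : onEdge l j t -> f j t = hf (Cc j * rC (cos (k * l j)) + D j * rC (sin (k * l j)))
        (Cc j * rC (sin (k * l j)) - D j * rC (cos (k * l j))) k t.
      by move=> ht; have [_ ->] := Htr j t ht; rewrite hf_shift.
    have coef j : A j = Cc j * rC (cos (k * l j)) + D j * rC (sin (k * l j)) /\
                  B j = Cc j * rC (sin (k * l j)) - D j * rC (cos (k * l j)).
      apply: (hf_coef kpos (lpos j)) => t ht.
      by rewrite -rep1 // -rep2.
    have fl j : f j (l j) = Cc j.
      have [_ ->] := Htr j (l j) (edgel j).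
      by rewrite subrr mulr0 cos0 sin0 rC1 rC0 mulr1 mulr0 addr0.
    have dv0 j : cderiv (f j) 0 = rC k * B j.
      rewrite (cderiv_eq_0 (lpos j) (fder j 0) (fun t ht => rep1 j t ht)).
      by rewrite cderiv_hf hf0.
    have dvl j : cderiv (f j) (l j) = - (rC k * D j).
      rewrite (cderiv_eq_l (lpos j) (fder j (l j)) (fun t ht => rep1 j t ht)).
      rewrite cderiv_hf /hf; have [-> ->] := coef j.
      by rewrite idI3 zz ?cs1 // mulr1.
    apply: (@alg_LR R N V o tau z A Cc B D g).
    * by move=> j; rewrite -(gH j).1 rep1 // hf0.
    * by move=> j; rewrite -(gH j).2 fl.
    * move=> v; have := kir v.
      rewrite (eq_bigr _ (fun j _ => dv0 j)) (eq_bigr _ (fun j _ => dvl j)).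
      rewrite sumrN opprK -!mulr_sumr -mulrDr => /eqP; rewrite mulf_eq0.
      by rewrite (negbTE (rC_k_neq0 kpos)) /= => /eqP.
    * move=> j; have [-> ->] := coef j.
      by rewrite zE /= expi_zc idI1 zz ?cs1 // mulr1.
    * move=> j; have [-> ->] := coef j.
      by rewrite zE /= expi_zc idI2.
- case=> [[w0 hw0] [a [ha wE]]].
  case: hw0 => l0 [lpos0 [k0 [k00 [eig0 [zE0 [f0 [Hf0 Htr0]]]]]]].
  have [a0|an0] := eqVneq a 0.
    exists l0; split => //; exists k0; split => //; split => //; split => //.
    exists (fun _ => hf 0 0 1); split.
      split.
      + by move=> j t; apply: cderivable_hf.
      + move=> j t _; split; first by rewrite cd00; apply: cderivable_hf.
        by rewrite !cd00 !hf00t oppr0 mulr0.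
      + by exists (fun _ => 0) => j; rewrite !hf00t.
      + by move=> v; rewrite cd00 !big1 ?subr0 // => j _; rewrite hf00t.
    exists (fun=> 0), (fun=> 0), (fun=> 0), (fun=> 0); split.
      by rewrite wE a0 mulmx0 trace0.
    case: ifP => _ j.
      by do 3 (split => //); move=> t _; rewrite hf00t.
    by move=> t _; rewrite hf00t !mul0r addr0.
  have [k [l [kpos [lpos zE]]]] := choose_kl lpos0 k00.
  rewrite zE0 {}zE in ha *.
  set S := Smx R o tau.
  pose x j := (S *m a) (lshift N j) 0.
  pose y j := (S *m a) (rshift N j) 0.
  pose aa j := a (lshift N j) 0.
  pose bb j := a (rshift N j) 0.
  pose A j := x j + bb j.
  pose Cc j := y j + aa j.
  pose B j := iC R * (x j - bb j).
  pose D j := iC R * (y j - aa j).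
  pose f j := hf (A j) (B j) k.
  have hx j : zc (cos (k * l j)) (sin (k * l j)) * x j = aa j.
    by rewrite -expi_zc (fixL ha j).
  have hy j : zc (cos (k * l j)) (sin (k * l j)) * y j = bb j.
    by rewrite -expi_zc (fixR ha j).
  have zzj j : zc (cos (k * l j)) (sin (k * l j)) * zb (cos (k * l j)) (sin (k * l j)) = 1.
    by rewrite zz ?cs1.
  have coefA j : Cc j * rC (cos (k * l j)) + D j * rC (sin (k * l j)) = A j.
    rewrite /Cc /D /A -(hx j) idJ1 zzj mulr1 -(hy j); ring.
  have coefB j : Cc j * rC (sin (k * l j)) - D j * rC (cos (k * l j)) = B j.
    rewrite /Cc /D /B -(hx j) idJ3 zzj mulr1 -(hy j); ring.
  have fl j : f j (l j) = Cc j.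
    rewrite /f /hf /A /B /Cc -(hy j) -(hx j) idJ1 zzj mulr1; ring.
  have dv0 j : cderiv (f j) 0 = rC k * B j.
    by rewrite /f cderiv_hf hf0.
  have dvl j : cderiv (f j) (l j) = - (rC k * D j).
    rewrite /f cderiv_hf /hf /A /B /D -(hy j) -(hx j) idJ2 zzj mulr1; ring.
  have eigf : in_eigenspace o tau l (k ^+ 2) f.
    split.
    + by move=> j t; apply: cderivable_hf.
    + by move=> j t _; apply: eigen_hf.
    + exists (fun v => 2%:R / (deg o tau v)%:R *
        (\sum_(i | o i == v) bb i + \sum_(i | tau i == v) aa i)) => j; split.
        by rewrite /f hf0 /A /x SL subrK.
      by rewrite fl /Cc /y SR subrK.
    + move=> v; rewrite (eq_bigr _ (fun j _ => dv0 j)) (eq_bigr _ (fun j _ => dvl j)).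
      transitivity (rC k * (\sum_(j | o j == v) B j + \sum_(j | tau j == v) D j)).
        by rewrite sumrN opprK mulrDr !mulr_sumr.
      by rewrite (kirch_RL o tau a v) mulr0.
  exists l; split => //; exists k; split; first exact: ltW.
  split.
    exists f; split => //.
    case: (pselect (exists j t, onEdge l j t /\ f j t != 0)) => // hn.
    exfalso; move/eqP: an0; apply.
    have fz j t : onEdge l j t -> f j t = 0.
      move=> ht; case: (eqVneq (f j t) 0) => // hne.
      by exfalso; apply: hn; exists j, t.
    have hAB j : A j = 0 /\ B j = 0.
      apply: (@hf_coef _ (A j) (B j) 0 0 k (l j) kpos (lpos j)) => t ht.
      by rewrite hf00t; apply: fz.
    have xb j : x j = bb j.
      have [_ eB] := hAB j; apply/eqP; rewrite -subr_eq0.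
      by move/eqP: eB; rewrite mulf_eq0 (negbTE (iC_neq0 R)).
    have b0 j : bb j = 0.
      have [eA _] := hAB j; move: eA; rewrite /A xb -mulr2n => /eqP.
      by rewrite mulrn_eq0 /= => /eqP.
    apply: col_split => j; rewrite mxE.
      by rewrite -[a (lshift N j) 0]/(aa j) -(hx j) xb b0 mulr0.
    exact: b0.
  split => //.
  exists f; split => //.
  exists A, Cc, B, D; split.
    by rewrite wE MmxE.
  rewrite ifN ?gt_eqF // => j t ht; split => //.
  by rewrite hf_shift coefA coefB.
Qed.
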